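(* Let $q=p^k$ with $p$ prime, $Q_q=\mathrm{GF}(q)$, $Q_{q^2}=Q_q\times Q_q$, and $n\ge2$. Let $r(x_1,\dots,x_n)=\sum_{i,j=1}^n\alpha_{ij}x_ix_j+\sum_{i=1}^n\beta_i(x_i)$ with $\alpha_{ij}\in\mathrm{GF}(q)$ and arbitrary functions $\beta_i:Q_q\to Q_q$. Let $M\subseteq Q_{q^2}^n$ be the set of $((x_1,y_1),\dots,(x_n,y_n))$ satisfying $\sum_{i=1}^n x_i=0$ and $\sum_{i=1}^n y_i+r(x_1,\dots,x_n)=0$. Then $M$ is a topolinear MDS code.
   Context: An MDS code (code distance 2) of length $n$ over an alphabet of size $Q$ is a set $M\subseteq Q_Q^n$ with $|M|=Q^{n-1}$ and any two distinct elements at Hamming distance at least $2$. An isotopism of $Q_{Q}^n$ is a map $\overline{x}\mapsto(\tau_1x_1,\dots,\tau_nx_n)$ with $\tau_i$ permutations of the alphabet; $M$ is topolinear if the group of isotopisms mapping $M$ onto $M$ contains a subgroup of cardinality $|M|$ acting transitively on $M$. *)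

(* Defs.v *)
From HB Require Import structures.
From mathcomp Require Import all_boot all_order all_algebra all_fingroup all_field.
Set Implicit Arguments. Unset Strict Implicit. Unset Printing Implicit Defensive.
Import GRing.Theory.

Definition word (A : finType) (n : nat) := {ffun 'I_n -> A}.

Definition hamming (A : finType) (n : nat) (x y : word A n) : nat :=
  #|[set i : 'I_n | x i != y i]|.

(* MDS code with code distance 2: |M| = |A|^(n-1), pairwise distance >= 2. *)
Definition MDS_code (A : finType) (n : nat) (M : {set word A n}) : Prop :=
  #|M| = (#|A| ^ n.-1)%N /\
  (forall x y, x \in M -> y \in M -> x != y -> (2 <= hamming x y)%N).

Definition isotopism (A : finType) (n : nat) := {ffun 'I_n -> {perm A}}.

Definition iso_apply (A : finType) (n : nat) (t : isotopism A n) (x : word A n)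
  : word A n := [ffun i => t i (x i)].

Definition iso_id (A : finType) (n : nat) : isotopism A n := [ffun _ => 1%g].
Definition iso_mul (A : finType) (n : nat) (s t : isotopism A n) : isotopism A n :=
  [ffun i => (s i * t i)%g].
Definition iso_inv (A : finType) (n : nat) (t : isotopism A n) : isotopism A n :=
  [ffun i => (t i)^-1%g].

Definition iso_subgroup (A : finType) (n : nat) (G : {set isotopism A n}) : Prop :=
  iso_id A n \in G /\
  (forall s t, s \in G -> t \in G -> iso_mul s t \in G) /\
  (forall t, t \in G -> iso_inv t \in G).

Definition topolinear (A : finType) (n : nat) (M : {set word A n}) : Prop :=
  exists G : {set isotopism A n},
    iso_subgroup G /\
    (forall t, t \in G -> [set iso_apply t x | x in M] = M) /\
    #|G| = #|M| /\
    (forall x y, x \in M -> y \in M -> exists2 t, t \in G & iso_apply t x = y).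

Definition code_M (F : finFieldType) (n : nat) (alpha : 'I_n -> 'I_n -> F)
  (beta : 'I_n -> F -> F) : {set word (F * F)%type n} :=
  [set z : word (F * F)%type n |
     ((\sum_(i < n) (z i).1 == 0)%R) &&
     (\sum_(i < n) (z i).2
        + (\sum_(i < n) \sum_(j < n) alpha i j * (z i).1 * (z j).1
           + \sum_(i < n) beta i (z i).1) == 0)%R].

(* Main.v *)
Require Import Defs.
From HB Require Import structures.
From mathcomp Require Import all_boot all_order all_algebra all_fingroup all_field.
From mathcomp Require Import ring.
Set Implicit Arguments. Unset Strict Implicit. Unset Printing Implicit Defensive.
Definition upd (A : finType) n (z : word A n) (i0 : 'I_n) (v : A) : word A n :=
  [ffun i => if i == i0 then v else z i].

Lemma card_fix (A : finType) n (i0 : 'I_n) (a0 : A) :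
  #|[set z : word A n | z i0 == a0]| = (#|A| ^ n.-1)%N.
Proof.
pose P := fun i : 'I_n => if i == i0 then pred1 a0 else predT.
have -> : #|[set z : word A n | z i0 == a0]| = #|(family P : simpl_pred (word A n))|.
  apply: eq_card => z; rewrite inE; apply/idP/familyP => [/eqP e i|H].
    rewrite /P; case: (eqVneq i i0) => [->|//]; by rewrite /= inE e.
  by have := H i0; rewrite /P eqxx.
rewrite card_family foldrE big_map big_enum /= (bigD1 i0) //= /P eqxx.
rewrite (eq_bigr (fun _ => #|A|)); last by move=> i /negbTE ->; apply: eq_card.
rewrite prod_nat_const cardC1 card_ord.
have -> : #|pred1 a0| = 1%N by rewrite card1.
by rewrite mul1n.
Qed.

Lemma card_graph (A : finType) n (i0 : 'I_n) (M : {set word A n}) (h : word A n -> A) (a0 : A) :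
  (forall z, (z \in M) = (z i0 == h z)) -> (forall z v, h (upd z i0 v) = h z) ->
  #|M| = (#|A| ^ n.-1)%N.
Proof.
move=> HM Hh; rewrite -(card_fix i0 a0).
have inj : {in M &, injective (fun z => upd z i0 a0)}.
  move=> z w; rewrite !HM => /eqP ez /eqP ew e; apply/ffunP => i.
  case: (eqVneq i i0) => [->|ne].
    by rewrite ez ew -(Hh z a0) -(Hh w a0) e.
  by have := congr1 (fun f : word A n => f i) e; rewrite /= !ffunE (negbTE ne).
rewrite -(card_in_imset inj); apply: eq_card => w; rewrite inE.
apply/imsetP/idP => [[z _ ->]|/eqP e]; first by rewrite ffunE eqxx.
exists (upd w i0 (h w)); first by rewrite HM ffunE eqxx Hh.
apply/ffunP => i; rewrite !ffunE; case: eqP => [->|//]; by rewrite e.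
Qed.

Import GRing.Theory.
Local Open Scope ring_scope.
Definition Qf (F : finFieldType) n (alpha : 'I_n -> 'I_n -> F) (x : 'I_n -> F) : F :=
  \sum_(i < n) \sum_(j < n) alpha i j * x i * x j.
Definition cf (F : finFieldType) n (alpha : 'I_n -> 'I_n -> F) (a : 'I_n -> F) (i : 'I_n) : F :=
  \sum_(j < n) (alpha i j + alpha j i) * a j.

Lemma Qf_ext (F : finFieldType) n (alpha : 'I_n -> 'I_n -> F) (x y : 'I_n -> F) :
  (forall i, x i = y i) -> Qf alpha x = Qf alpha y.
Proof. by move=> e; apply: eq_bigr => i _; apply: eq_bigr => j _; rewrite !e. Qed.

Lemma cf_ext (F : finFieldType) n (alpha : 'I_n -> 'I_n -> F) (x y : 'I_n -> F) i :
  (forall i, x i = y i) -> cf alpha x i = cf alpha y i.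
Proof. by move=> e; apply: eq_bigr => j _; rewrite !e. Qed.

Lemma cfD (F : finFieldType) n (alpha : 'I_n -> 'I_n -> F) (x y : 'I_n -> F) i :
  cf alpha (fun j => x j + y j) i = cf alpha x i + cf alpha y i.
Proof. rewrite /cf -big_split; apply: eq_bigr => j _ /=. ring. Qed.

Lemma cfN (F : finFieldType) n (alpha : 'I_n -> 'I_n -> F) (x : 'I_n -> F) i :
  cf alpha (fun j => - x j) i = - cf alpha x i.
Proof. by rewrite /cf -sumrN; apply: eq_bigr => j _; ring. Qed.

Lemma cf_sum (F : finFieldType) n (alpha : 'I_n -> 'I_n -> F) (x a : 'I_n -> F) :
  \sum_i cf alpha a i * x i =
  \sum_(i < n) \sum_(j < n) alpha i j * x i * a j + \sum_(i < n) \sum_(j < n) alpha i j * a i * x j.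
Proof.
rewrite [X in _ = _ + X]exchange_big /= -big_split /=; apply: eq_bigr => i _.
by rewrite /cf big_distrl -big_split /=; apply: eq_bigr => j _; ring.
Qed.

Lemma Qshift (F : finFieldType) n (alpha : 'I_n -> 'I_n -> F) (x a : 'I_n -> F) :
  Qf alpha (fun i => x i + a i) = Qf alpha x + \sum_i cf alpha a i * x i + Qf alpha a.
Proof.
rewrite cf_sum /Qf -!big_split /=; apply: eq_bigr => i _.
by rewrite -!big_split /=; apply: eq_bigr => j _; ring.
Qed.

Definition fstw (F : finFieldType) n (u : word (F * F)%type n) : 'I_n -> F := fun j => (u j).1.

Definition tf (F : finFieldType) n (alpha : 'I_n -> 'I_n -> F) (beta : 'I_n -> F -> F)
  (u : word (F * F)%type n) (i : 'I_n) (p : F * F) : F * F :=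
  (p.1 + (u i).1, p.2 + (u i).2 - cf alpha (fstw u) i * p.1 - beta i (p.1 + (u i).1) + beta i p.1).

Lemma tf_inj (F : finFieldType) n (alpha : 'I_n -> 'I_n -> F) (beta : 'I_n -> F -> F)
  (u : word (F * F)%type n) (i : 'I_n) : injective (tf alpha beta u i).
Proof.
move=> [x y] [x' y'] [] /= /addIr ex; subst x'.
by rewrite -!addrA => /addIr ->.
Qed.

Definition Tp (F : finFieldType) n (alpha : 'I_n -> 'I_n -> F) (beta : 'I_n -> F -> F)
  (u : word (F * F)%type n) (i : 'I_n) : {perm F * F} := perm (@tf_inj F n alpha beta u i).

Definition T (F : finFieldType) n (alpha : 'I_n -> 'I_n -> F) (beta : 'I_n -> F -> F)
  (u : word (F * F)%type n) : isotopism (F * F)%type n := [ffun i => Tp alpha beta u i].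

Lemma TE (F : finFieldType) n (alpha : 'I_n -> 'I_n -> F) (beta : 'I_n -> F -> F)
  (u : word (F * F)%type n) i p : T alpha beta u i p = tf alpha beta u i p.
Proof. by rewrite ffunE permE. Qed.

Definition chk (F : finFieldType) n (alpha : 'I_n -> 'I_n -> F) (beta : 'I_n -> F -> F)
  (z : word (F * F)%type n) : F :=
  \sum_(i < n) (z i).2 + (Qf alpha (fstw z) + \sum_(i < n) beta i (z i).1).

Lemma inM (F : finFieldType) n (alpha : 'I_n -> 'I_n -> F) (beta : 'I_n -> F -> F) z :
  (z \in code_M alpha beta) = (\sum_(i < n) (z i).1 == 0) && (chk alpha beta z == 0).
Proof. by rewrite inE. Qed.

Lemma xsum_T (F : finFieldType) n (alpha : 'I_n -> 'I_n -> F) (beta : 'I_n -> F -> F) u z :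
  \sum_(i < n) (iso_apply (T alpha beta u) z i).1 = \sum_(i < n) (z i).1 + \sum_(i < n) (u i).1.
Proof. by rewrite -big_split; apply: eq_bigr => i _; rewrite ffunE TE. Qed.

Lemma chk_T (F : finFieldType) n (alpha : 'I_n -> 'I_n -> F) (beta : 'I_n -> F -> F) u z :
  chk alpha beta (iso_apply (T alpha beta u) z) =
  chk alpha beta z + (\sum_(i < n) (u i).2 + Qf alpha (fstw u)).
Proof.
rewrite /chk (Qf_ext _ (y := fun i => fstw z i + fstw u i)); last first.
  by move=> i; rewrite /fstw ffunE TE.
rewrite Qshift.
rewrite (eq_bigr (fun i => (z i).2 + (u i).2 - cf alpha (fstw u) i * fstw z i
   - beta i (fstw z i + fstw u i) + beta i (fstw z i))); last by move=> i _; rewrite ffunE TE.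
rewrite (eq_bigr (fun i => beta i (fstw z i + fstw u i)) (P := xpredT) (F1 := fun i => beta i (iso_apply _ z i).1)); last by move=> i _; rewrite ffunE TE.
rewrite !big_split /= !sumrN.
rewrite /fstw /=; ring.
Qed.

Definition wmul (F : finFieldType) n (alpha : 'I_n -> 'I_n -> F) (u v : word (F * F)%type n)
  : word (F * F)%type n :=
  [ffun i => ((u i).1 + (v i).1, (u i).2 + (v i).2 - cf alpha (fstw v) i * (u i).1)].

Definition winv (F : finFieldType) n (alpha : 'I_n -> 'I_n -> F) (u : word (F * F)%type n)
  : word (F * F)%type n :=
  [ffun i => (- (u i).1, - (u i).2 - cf alpha (fstw u) i * (u i).1)].

Definition w0 (F : finFieldType) n : word (F * F)%type n := [ffun _ => (0, 0)].

Lemma T_mul (F : finFieldType) n (alpha : 'I_n -> 'I_n -> F) (beta : 'I_n -> F -> F) u v :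
  iso_mul (T alpha beta u) (T alpha beta v) = T alpha beta (wmul alpha u v).
Proof.
apply/ffunP => i; rewrite ffunE; apply/permP => p; rewrite permM !TE /tf.
rewrite (cf_ext _ _ (x := fstw (wmul alpha u v)) (y := fun j => fstw u j + fstw v j)); last by move=> j; rewrite /fstw ffunE.
rewrite cfD !ffunE /= !addrA; congr pair; rewrite /fstw /=; ring.
Qed.

Lemma T_inv (F : finFieldType) n (alpha : 'I_n -> 'I_n -> F) (beta : 'I_n -> F -> F) u :
  iso_inv (T alpha beta u) = T alpha beta (winv alpha u).
Proof.
apply/ffunP => i; rewrite ffunE; apply/eqP; rewrite eq_invg_mul; apply/eqP/permP => p.
rewrite permM perm1 !TE /tf.
rewrite (cf_ext _ _ (x := fstw (winv alpha u)) (y := fun j => - fstw u j)); last by move=> j; rewrite /fstw /wmul /winv /w0 ffunE.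
rewrite cfN !ffunE /= addrK; case: p => x y /=; congr pair; rewrite /fstw /=; ring.
Qed.

Lemma T_id (F : finFieldType) n (alpha : 'I_n -> 'I_n -> F) (beta : 'I_n -> F -> F) :
  T alpha beta (w0 F n) = iso_id (F * F)%type n.
Proof.
apply/ffunP => i; apply/permP => p; rewrite TE ffunE perm1 /tf.
rewrite (cf_ext _ _ (x := fstw (w0 F n)) (y := fun j => 0)); last by move=> j; rewrite /fstw /wmul /winv /w0 ffunE.
rewrite /cf big1 ?ffunE /=; last by move=> j _; rewrite mulr0.
case: p => x y /=; by rewrite !addr0 mul0r subr0 subrK.
Qed.

Lemma T_inj (F : finFieldType) n (alpha : 'I_n -> 'I_n -> F) (beta : 'I_n -> F -> F) :
  injective (T alpha beta).
Proof.
move=> u v e.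
have e1 : forall i, (u i).1 = (v i).1.
  move=> i; have := congr1 (fun t : isotopism _ n => (t i (0, 0)).1) e.
  by rewrite /= !TE /tf /= !add0r.
apply/ffunP => i; have := congr1 (fun t : isotopism _ n => (t i (0, 0)).2) e.
rewrite /= !TE /tf /= !mulr0 !subr0 !add0r e1 => /addIr /addIr.
by case: (u i) (v i) (e1 i) => a b [a' b'] /= -> ->.
Qed.

Lemma inS (F : finFieldType) n (alpha : 'I_n -> 'I_n -> F) (u : word (F * F)%type n) :
  (u \in code_M alpha (fun _ _ => 0)) =
  (\sum_(i < n) (u i).1 == 0) && (\sum_(i < n) (u i).2 + Qf alpha (fstw u) == 0).
Proof. by rewrite inE big1_eq addr0. Qed.

Lemma QN (F : finFieldType) n (alpha : 'I_n -> 'I_n -> F) (x : 'I_n -> F) :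
  Qf alpha (fun i => - x i) = Qf alpha x.
Proof. by rewrite /Qf; apply: eq_bigr => i _; apply: eq_bigr => j _ /=; ring. Qed.

Lemma wmul_S (F : finFieldType) n (alpha : 'I_n -> 'I_n -> F) u v :
  u \in code_M alpha (fun _ _ => 0) -> v \in code_M alpha (fun _ _ => 0) ->
  wmul alpha u v \in code_M alpha (fun _ _ => 0).
Proof.
rewrite !inS => /andP[/eqP Hu1 /eqP Hu2] /andP[/eqP Hv1 /eqP Hv2].
apply/andP; split.
  rewrite (eq_bigr (fun i => (u i).1 + (v i).1)); last by move=> i _; rewrite ffunE.
  by rewrite big_split /= Hu1 Hv1 addr0.
rewrite (Qf_ext _ (x := fstw (wmul alpha u v)) (y := fun i => fstw u i + fstw v i)); last first.
  by move=> i; rewrite /fstw ffunE.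
rewrite Qshift.
rewrite (eq_bigr (fun i => (u i).2 + (v i).2 - cf alpha (fstw v) i * fstw u i)); last first.
  by move=> i _; rewrite ffunE.
rewrite !big_split /= sumrN.
set A := \sum_(i < n) (u i).2. set B := \sum_(i < n) (v i).2.
set C := \sum_(i < n) cf alpha (fstw v) i * fstw u i.
have -> : A + B + - C + (Qf alpha (fstw u) + C + Qf alpha (fstw v)) =
  (A + Qf alpha (fstw u)) + (B + Qf alpha (fstw v)) by ring.
by rewrite Hu2 Hv2 addr0.
Qed.

Lemma winv_S (F : finFieldType) n (alpha : 'I_n -> 'I_n -> F) u :
  u \in code_M alpha (fun _ _ => 0) -> winv alpha u \in code_M alpha (fun _ _ => 0).
Proof.
rewrite !inS => /andP[/eqP Hu1 /eqP Hu2].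
apply/andP; split.
  rewrite (eq_bigr (fun i => - (u i).1)); last by move=> i _; rewrite ffunE.
  by rewrite sumrN Hu1 oppr0.
rewrite (Qf_ext _ (x := fstw (winv alpha u)) (y := fun i => - fstw u i)); last first.
  by move=> i; rewrite /fstw ffunE.
rewrite QN.
rewrite (eq_bigr (fun i => - (u i).2 - cf alpha (fstw u) i * fstw u i)); last first.
  by move=> i _; rewrite ffunE.
rewrite big_split /= !sumrN cf_sum.
rewrite -/(Qf alpha (fstw u)).
set A := \sum_(i < n) (u i).2.
have -> : - A + - (Qf alpha (fstw u) + Qf alpha (fstw u)) + Qf alpha (fstw u) =
  - (A + Qf alpha (fstw u)) by ring.
by rewrite Hu2 oppr0.
Qed.

Lemma w0_S (F : finFieldType) n (alpha : 'I_n -> 'I_n -> F) :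
  w0 F n \in code_M alpha (fun _ _ => 0).
Proof.
rewrite inS big1 ?eqxx /=; last by move=> i _; rewrite ffunE.
rewrite big1 ?add0r; last by move=> i _; rewrite ffunE.
rewrite /Qf big1 // => i _; rewrite big1 // => j _; rewrite /fstw ffunE /= mulr0. by rewrite mul0r.
Qed.

Definition hx (F : finFieldType) n (i0 : 'I_n) (z : word (F * F)%type n) : 'I_n -> F :=
  fun i => if i == i0 then - \sum_(j < n | j != i0) (z j).1 else (z i).1.

Definition hM (F : finFieldType) n (alpha : 'I_n -> 'I_n -> F) (beta : 'I_n -> F -> F)
  (i0 : 'I_n) (z : word (F * F)%type n) : F * F :=
  (- \sum_(j < n | j != i0) (z j).1,
   - (\sum_(j < n | j != i0) (z j).2 + (Qf alpha (hx i0 z) + \sum_(i < n) beta i (hx i0 z i)))).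

Lemma memM (F : finFieldType) n (alpha : 'I_n -> 'I_n -> F) (beta : 'I_n -> F -> F) i0 z :
  (z \in code_M alpha beta) = (z i0 == hM alpha beta i0 z).
Proof.
rewrite inM /chk (bigD1 i0) //= [\sum_(i < n) (z i).2](bigD1 i0) //=.
rewrite /hM; case E: (z i0) => [xa yb]; rewrite xpair_eqE /= addr_eq0.
case: eqP => //= ea.
have ex : forall i, fstw z i = hx i0 z i.
  move=> i; rewrite /hx /fstw; case: eqP => [->|//]; by rewrite E -ea.
rewrite (Qf_ext _ ex) [\sum_(i < n) beta i (z i).1](eq_bigr (fun i => beta i (hx i0 z i))); last first.
  by move=> i _; rewrite -ex.
by rewrite -addrA addr_eq0.
Qed.

Lemma hM_upd (F : finFieldType) n (alpha : 'I_n -> 'I_n -> F) (beta : 'I_n -> F -> F) i0 z v :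
  hM alpha beta i0 (upd z i0 v) = hM alpha beta i0 z.
Proof.
have e : forall j, j != i0 -> upd z i0 v j = z j by move=> j /negbTE nj; rewrite ffunE nj.
have s1 : \sum_(j < n | j != i0) (upd z i0 v j).1 = \sum_(j < n | j != i0) (z j).1.
  by apply: eq_bigr => j /e ->.
have s2 : \sum_(j < n | j != i0) (upd z i0 v j).2 = \sum_(j < n | j != i0) (z j).2.
  by apply: eq_bigr => j /e ->.
have hx_e : forall i, hx i0 (upd z i0 v) i = hx i0 z i.
  move=> i; rewrite /hx s1; case: eqP => // /eqP ni; by rewrite e.
rewrite /hM s1 s2 (Qf_ext _ hx_e); congr (_, - (_ + (_ + _))).
by apply: eq_bigr => i _; rewrite hx_e.
Qed.

Lemma iso_apply_inj (A : finType) n (t : isotopism A n) : injective (iso_apply t).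
Proof.
move=> x y e; apply/ffunP => i.
have := congr1 (fun f : word A n => f i) e; rewrite /= !ffunE; exact: perm_inj.
Qed.

Theorem theorem2 (p k : nat) (F : finFieldType) (hp : prime p)
  (hF : #|F| = (p ^ k)%N) (n : nat) (hn : (2 <= n)%N)
  (alpha : 'I_n -> 'I_n -> F) (beta : 'I_n -> F -> F) :
  MDS_code (code_M alpha beta) /\ topolinear (code_M alpha beta).
Proof.
have n0 : (0 < n)%N by apply: leq_trans hn.
pose i0 := Ordinal n0.
have cardM : forall (b : 'I_n -> F -> F), #|code_M alpha b| = (#|{: F * F}| ^ n.-1)%N.
  move=> b; apply: (card_graph (h := hM alpha b i0) (0, 0)).
    by move=> z; apply: memM.
  by move=> z v; apply: hM_upd.
split.
  split; first exact: cardM.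
  move=> x y xM yM nxy; rewrite /hamming.
  case: (leqP 2 #|[set i | x i != y i]|) => // lt2; exfalso.
  have [j jD] : exists j, j \in [set i | x i != y i].
    apply/existsP; rewrite -(negbK [exists j, _]) negb_exists; apply/negP => /forallP H.
    by move/negP: nxy; apply; apply/eqP/ffunP => i; have := H i; rewrite inE negbK => /eqP.
  have D1 : [set i | x i != y i] = [set j].
    apply/eqP; rewrite eq_sym eqEcard sub1set jD cards1 /=; by rewrite -ltnS.
  have ex : x = upd y j (x j).
    apply/ffunP => i; rewrite ffunE; case: eqP => [->//|/eqP ne].
    apply/eqP; apply: contraR ne => H; have : i \in [set i | x i != y i] by rewrite inE.
    by rewrite D1 inE.
  move: jD; rewrite inE; move: xM yM; rewrite !(memM _ _ j) => /eqP xj /eqP yj.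
  by rewrite xj yj ex hM_upd eqxx.
pose S := code_M alpha (fun _ _ => 0).
exists [set T alpha beta u | u in S].
have stab : forall u, u \in S -> forall z, z \in code_M alpha beta ->
    iso_apply (T alpha beta u) z \in code_M alpha beta.
  move=> u; rewrite inS => /andP[/eqP u1 /eqP u2] z; rewrite !inM => /andP[/eqP z1 /eqP z2].
  by rewrite xsum_T chk_T z1 z2 u1 u2 addr0 eqxx.
split; [split; [|split] | split; [|split]].
- by apply/imsetP; exists (w0 F n); [apply: w0_S | rewrite T_id].
- move=> s t /imsetP[u uS ->] /imsetP[v vS ->]; rewrite T_mul.
  by apply/imsetP; exists (wmul alpha u v) => //; apply: wmul_S.
- move=> t /imsetP[u uS ->]; rewrite T_inv.
  by apply/imsetP; exists (winv alpha u) => //; apply: winv_S.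
- move=> t /imsetP[u uS ->]; apply/eqP; rewrite eqEcard card_imset; last exact: iso_apply_inj.
  rewrite leqnn andbT; apply/subsetP => w /imsetP[z zM ->]; exact: stab.
- by rewrite card_imset; [rewrite !cardM | exact: T_inj].
move=> z z' zM z'M.
pose a := fun i => (z' i).1 - (z i).1.
pose u : word (F * F)%type n := [ffun i => (a i,
   (z' i).2 - (z i).2 + cf alpha a i * (z i).1 + beta i (z' i).1 - beta i (z i).1)].
have Tz : iso_apply (T alpha beta u) z = z'.
  apply/ffunP => i; rewrite ffunE TE /tf.
  rewrite (cf_ext _ _ (x := fstw u) (y := a)); last by move=> j; rewrite /fstw ffunE.
  rewrite ffunE /= /a subrKC.
  by case: (z' i) => c d /=; congr pair; ring.
exists (T alpha beta u) => //; apply/imsetP; exists u => //.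
move: zM z'M; rewrite inS !inM => /andP[/eqP z1 /eqP z2] /andP[/eqP z1' /eqP z2'].
apply/andP; split.
  rewrite (eq_bigr (fun i => (z' i).1 - (z i).1)); last by move=> i _; rewrite ffunE.
  by rewrite sumrB z1 z1' subr0.
by have := chk_T alpha beta u z; rewrite Tz z2 z2' add0r => <-.
Qed.
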